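(* Let $S(t)$ be an inverse subordinator, $T>0$, $Z_0>0$, $\sigma>0$. Assume the option is at the money ($K=Z_0$), the interest rate is $r=0$, and the Bachelier volatility is $\sigma^{Ba}=\sigma Z_0$. Let $C^{Ba}_S(T)$ and $C_S(T)$ be the fair prices of the European call option with strike $K$ and expiry $T$ in the subordinated Bachelier model and in the subordinated Black–Scholes model, respectively. Then $$0\le C^{Ba}_S(T)-C_S(T)\le \mathbb{E}\big[S(T)^{3/2}\big]\cdot\frac{Z_0}{12\sqrt{2\pi}}\,\sigma^3 .$$ The same two-sided bound holds for the corresponding European put prices.
   Context: Inverse subordinator: let $\nu$ be a Lévy measure on $(0,\infty)$ with $\int_0^\infty \min(1,x)\,\nu(dx)<\infty$ and $\nu(0,\infty)=\infty$, let $\psi(u)=\int_0^\infty(1-e^{-ux})\,\nu(dx)$, and let $U_\psi$ be the subordinator with $\mathbb{E}e^{-uU_\psi(t)}=e^{-t\psi(u)}$; the inverse subordinator is $S(t)=\inf\{\tau>0: U_\psi(\tau)>t\}$. $B$ is a standard Brownian motion independent of $S$. Subordinated Bachelier model: underlying $Z^{Ba}_S(t)=Z_0+\mu S(t)+\sigma^{Ba}B(S(t))$; subordinated B-S model: underlying $Z_S(t)=Z_0\exp(\mu S(t)+\sigma B(S(t)))$. For $\tau\ge0$, let $C^{Ba}(\tau)$ be the classical Bachelier call price with time to maturity $\tau$ (with $r=0$, $K=Z_0$: $C^{Ba}(\tau)=\sigma^{Ba}\sqrt{\tau}/\sqrt{2\pi}$) and $C(\tau)$ the classical Black–Scholes call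 price (with $r=0$, $K=Z_0$: $C(\tau)=Z_0(2\Phi(\sigma\sqrt\tau/2)-1)$, $\Phi$ the standard normal CDF). The fair prices in the subordinated models are $C^{Ba}_S(T)=\mathbb{E}\,C^{Ba}(S(T))$ and $C_S(T)=\mathbb{E}\,C(S(T))$ (prices under the respective minimal-entropy martingale measures); put prices are defined analogously. *)

(* Defs.v *)
From HB Require Import structures.
From mathcomp Require Import all_boot all_order all_algebra.
From mathcomp Require Import all_classical all_reals all_analysis.
Set Implicit Arguments. Unset Strict Implicit. Unset Printing Implicit Defensive.
Import Order.TTheory GRing.Theory Num.Theory.
Import numFieldNormedType.Exports.
Local Open Scope classical_set_scope.
Local Open Scope ring_scope.

Section Defs.
Context (R : realType).

(** Lévy measure on (0,oo) with int min(1,x) nu(dx) < oo and nu(0,oo) = oo,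
    viewed as a Borel measure on R giving no mass to (-oo,0]. *)
Definition levy_measure (nu : {measure set R -> \bar R}) : Prop :=
  [/\ nu [set x : R | x <= 0] = 0%E,
      (\int[nu]_(x in [set x : R | (0 < x)%R]) (Num.min (1%R : R) x)%:E < +oo)%E
    & nu [set x : R | (0 < x)%R] = +oo%E].

Definition laplace_exponent (nu : {measure set R -> \bar R}) (u : R) : \bar R :=
  (\int[nu]_(x in [set x : R | (0 < x)%R]) (1 - expR (- (u * x)))%R%:E)%E.

Context (d : measure_display) (Omega : measurableType d) (P : probability Omega R).

Definition independent_increments (U : R -> Omega -> R) : Prop :=
  forall (n : nat) (s : nat -> R) (A : nat -> set R),
    0 <= s 0%N -> (forall i, s i <= s i.+1) -> (forall i, measurable (A i)) ->
    P (\bigcap_(i in [set k | (k < n)%N]) [set w | A i (U (s i.+1) w - U (s i) w)])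
    = (\prod_(i < n) P [set w | A i (U (s i.+1) w - U (s i) w)%R])%E.

Definition subordinator (nu : {measure set R -> \bar R}) (U : R -> Omega -> R) : Prop :=
  (forall t, measurable_fun setT (U t)) /\
  [/\ (forall w, U 0 w = 0),
      (forall w s t, 0 <= s -> s <= t -> U s w <= U t w),
      (forall w t, 0 <= t -> U s w @[s --> t^'+] --> U t w),
      independent_increments U
    & (forall s t u, 0 <= s -> 0 <= t -> 0 <= u ->
        (\int[P]_w (expR (- (u * (U (s + t) w - U s w))))%:E)%E
        = (expR (- (t * fine (laplace_exponent nu u))))%:E)].

Definition inverse_subordinator (U : R -> Omega -> R) (t : R) (w : Omega) : R :=
  inf [set tau | 0 < tau /\ t < U tau w].

Definition subordinated_price (X : Omega -> R) (C : R -> R) : \bar R :=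
  (\int[P]_w (C (X w))%:E)%E.

End Defs.

Section Pricing.
Context (R : realType).

Definition std_normal_pdf (x : R) : R := normal_pdf 0 1 x.
Definition std_normal_cdf (x : R) : R := fine (normal_prob 0 1 [set y : R | y <= x]).

Definition bachelier_call (Z0 K sigBa tau : R) : R :=
  if tau <= 0 then Num.max (Z0 - K) 0 else
  let dd := (Z0 - K) / (sigBa * Num.sqrt tau) in
  (Z0 - K) * std_normal_cdf dd + sigBa * Num.sqrt tau * std_normal_pdf dd.

Definition bachelier_put (Z0 K sigBa tau : R) : R :=
  if tau <= 0 then Num.max (K - Z0) 0 else
  let dd := (Z0 - K) / (sigBa * Num.sqrt tau) in
  (K - Z0) * std_normal_cdf (- dd) + sigBa * Num.sqrt tau * std_normal_pdf dd.

Definition bs_call (Z0 K sig tau : R) : R :=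
  if tau <= 0 then Num.max (Z0 - K) 0 else
  let d1 := (ln (Z0 / K) + sig ^+ 2 * tau / 2) / (sig * Num.sqrt tau) in
  let d2 := d1 - sig * Num.sqrt tau in
  Z0 * std_normal_cdf d1 - K * std_normal_cdf d2.

Definition bs_put (Z0 K sig tau : R) : R :=
  if tau <= 0 then Num.max (K - Z0) 0 else
  let d1 := (ln (Z0 / K) + sig ^+ 2 * tau / 2) / (sig * Num.sqrt tau) in
  let d2 := d1 - sig * Num.sqrt tau in
  K * std_normal_cdf (- d2) - Z0 * std_normal_cdf (- d1).

End Pricing.

(* Main.v *)
Require Import Defs.
From HB Require Import structures.
From mathcomp Require Import all_boot all_order all_algebra.
From mathcomp Require Import all_classical all_reals all_analysis.
From mathcomp Require Import ring lra measurable_realfun.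
Import Order.TTheory GRing.Theory Num.Theory.
Import numFieldNormedType.Exports.
Local Open Scope classical_set_scope.
Local Open Scope ring_scope.

Section S.
Context (R : realType) (d : measure_display) (Omega : measurableType d).

Lemma S_meas (U : R -> Omega -> R) (T : R) :
  (forall t, measurable_fun setT (U t)) ->
  (forall w s t, 0 <= s -> s <= t -> U s w <= U t w) ->
  measurable_fun setT (inverse_subordinator U T).
Proof.
move=> mU monU.
apply: (measurability (@RGenInftyO.G R)) => [|/= _ [_] [r] -> <-].
  exact: RGenInftyO.measurableE.
set A := fun n : nat => [set w | 0 < r - n.+1%:R^-1 /\ T < U (r - n.+1%:R^-1) w].
set B := \bigcap_(n in [set: nat]) [set w | U n.+1%:R w <= T].
have -> : setT `&` inverse_subordinator U T @^-1` `]-oo, r[ =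
   (\bigcup_(n in [set: nat]) A n) `|` (B `&` [set _ | 0 < r]).
  apply/seteqP; split => w /=.
    rewrite in_itv /= => -[_ Sw].
    set E := [set tau | 0 < tau /\ T < U tau w].
    have [[y Ey]|E0] := pselect (E !=set0).
      have [z [z0 Tz] zr] := inf_lt (ex_intro _ y Ey) Sw.
      left; exists (Num.Def.trunc ((r - z)^-1)) => //; rewrite /A /=.
      have rz : 0 < r - z by rewrite subr_gt0.
      set m := (Num.Def.trunc ((r - z)^-1)).+1%:R.
      have hm := truncnS_gt ((r - z)^-1); rewrite -/m in hm.
      have m0 : 0 < m by rewrite ltr0n.
      have hz : z <= r - m^-1.
        rewrite lerBrDl -lerBrDr -[m^-1]mulr1 ler_pdivrMl// -ler_pdivrMr//.
        by rewrite mul1r ltW.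
      split; first exact: lt_le_trans hz.
      exact: (lt_le_trans Tz (monU w _ _ (ltW z0) hz)).
    move: Sw; rewrite /inverse_subordinator -/E.
    have -> : E = set0 by apply/seteqP; split => x // Ex; apply: E0; exists x.
    rewrite inf0 => r0; right; split => // n _.
    rewrite /= leNgt; apply/negP => h; apply: E0; exists n.+1%:R; split => //.
  have lbE : has_lbound [set tau | 0 < tau /\ T < U tau w].
    by exists 0 => x [x0 _]; exact: ltW.
  move=> [[n _ [c0 Tc]]|[Bw r0]]; split => //; rewrite in_itv /=.
    apply: (le_lt_trans (ge_inf lbE (conj c0 Tc))).
    by rewrite ltrBlDr ltrDl invr_gt0 ltr0n.
  rewrite /inverse_subordinator.
  have -> : [set tau | 0 < tau /\ T < U tau w] = set0; last by rewrite inf0.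
  apply/seteqP; split => x // [x0 Tx].
  have := Bw (Num.Def.trunc x) Logic.I => /=.
  rewrite leNgt => /negP; apply.
  exact: (lt_le_trans Tx (monU w _ _ (ltW x0) (ltW (truncnS_gt x)))).
apply: measurableU.
  apply: bigcupT_measurable => n.
  have [c0|c0] := boolP (0 < r - n.+1%:R^-1).
    rewrite (_ : A n = setT `&` U (r - n.+1%:R^-1) @^-1` `]T, +oo[).
      exact: mU.
    apply/seteqP; split => w /=; rewrite ?in_itv/= ?andbT.
      by case.
    by case => _ h; split.
  rewrite (_ : A n = set0); first exact: measurable0.
  by apply/seteqP; split => w //=; rewrite /A /= => -[h _]; rewrite h in c0.
apply: measurableI.
  apply: bigcapT_measurable => n.
  rewrite (_ : [set w | _] = setT `&` U n.+1%:R @^-1` `]-oo, T]).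
    exact: mU.
  by apply/seteqP; split => w /=; rewrite ?in_itv/= ?andbT //; case.
have [r0|r0] := boolP (0 < r).
  by rewrite (_ : [set _ | _] = setT) //; apply/seteqP; split.
by rewrite (_ : [set _ | _] = set0) //; apply/seteqP; split => w //= /negP.
Qed.
End S.

Section Ana.
Context (R : realType).
Local Notation N := (@normal_prob R 0 1).
Local Notation Phi := (@std_normal_cdf R).
Local Notation peak := (@normal_peak R 1).

Lemma P_fin d (T : measurableType d) (Q : probability T R) A :
  measurable A -> Q A \is a fin_num.
Proof.
move=> mA; rewrite ge0_fin_numE ?measure_ge0//.
exact: (le_lt_trans (probability_le1 Q mA) (ltry 1)).
Qed.

Lemma N_fin A : measurable A -> N A \is a fin_num.
Proof. exact: P_fin. Qed.

Lemma Phi_diff u v : u <= v -> Phi v - Phi u = fine (N `]u, v]).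
Proof.
move=> uv.
have mu : measurable [set y : R | y <= u].
  rewrite (_ : [set y | y <= u] = `]-oo, u]%classic); first exact: measurable_itv.
  by apply/seteqP; split => y /=; rewrite in_itv.
rewrite /std_normal_cdf; have -> : [set y : R | y <= v] = [set y | y <= u] `|` `]u, v].
  apply/seteqP; split => y /=; rewrite in_itv /=.
    by move=> yv; have [yu|yu] := leP y u; [left|right; apply/andP].
  move=> []; first by move=> yu; exact: le_trans uv.
  by move=> /andP[_ ->].
rewrite measureU //; last first.
  apply/seteqP; split => y //= [yu]; rewrite in_itv /= => /andP[uy _].
  by move: (lt_le_trans uy yu); rewrite ltxx.
rewrite fineD ?(N_fin mu) ?(N_fin (measurable_itv _)) //.
rewrite addrC addKr. by []. all: rewrite ge0_fin_numE ?measure_ge0 //; apply: le_lt_trans (ltry 1); exact: probability_le1.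
Qed.

Lemma pdf_ub x : std_normal_pdf x <= peak.
Proof. exact: normal_pdf_ub. Qed.

Lemma pdf_lb x : peak * (1 - x ^+ 2 / 2) <= std_normal_pdf x.
Proof.
rewrite /std_normal_pdf normal_pdfE ?oner_neq0 //.
rewrite ler_pM2l ?normal_peak_gt0 ?oner_neq0 //.
rewrite /normal_fun; apply: le_trans (expR_ge1Dx _).
by rewrite subr0 expr1n mulr2n; lra.
Qed.

Lemma pdf0 : std_normal_pdf 0 = peak.
Proof.
rewrite /std_normal_pdf normal_pdfE ?oner_neq0 // /normal_fun.
by rewrite subr0 expr0n /= oppr0 mul0r expR0 mulr1.
Qed.

Lemma N_ub u v : u <= v -> fine (N `]u, v]) <= peak * (v - u).
Proof.
move=> uv.
have : (N `]u, v] <= (peak * (v - u))%:E)%E.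
  apply: (@le_trans _ _ (\int[lebesgue_measure]_(x in `]u, v]) (cst peak%:E x))%E).
    apply: ge0_le_integral => //.
    - by move=> x _; rewrite lee_fin normal_pdf_ge0.
    - apply/measurable_funTS/measurable_EFinP; exact: measurable_normal_pdf.
    - by move=> x _; rewrite lee_fin; exact: pdf_ub.
  rewrite integral_cst // -[X in (_ * X)%E]/(lebesgue_measure (`]u, v]%classic : set R)) lebesgue_measure_itv /= lte_fin.
  case: ifPn => [_|]; first by rewrite -EFinM.
  rewrite -leNgt => vu; have -> : v = u by apply/le_anti/andP.
  by rewrite subrr mulr0 mule0.
move=> h; rewrite -lee_fin fineK ?N_fin//; exact: measurable_itv.
Qed.

Lemma N_lb u v c : u <= v -> (forall x, u < x <= v -> c <= std_normal_pdf x) ->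
  c * (v - u) <= fine (N `]u, v]).
Proof.
move=> uv hc.
have [c0|c0] := ltP c 0.
  apply: le_trans (fine_ge0 (measure_ge0 _ _)).
  by rewrite nmulr_rle0 // subr_ge0.
have : ((c * (v - u))%:E <= N `]u, v])%E.
  apply: (@le_trans _ _ (\int[lebesgue_measure]_(x in `]u, v]) (cst c%:E x))%E).
    rewrite integral_cst // -[X in (_ * X)%E]/(lebesgue_measure (`]u, v]%classic : set R)) lebesgue_measure_itv /= lte_fin.
    case: ifPn => [_|]; first by rewrite -EFinM.
    rewrite -leNgt => vu; have -> : v = u by apply/le_anti/andP.
    by rewrite subrr mulr0 mule0.
  apply: ge0_le_integral => //.
  - apply/measurable_funTS/measurable_EFinP; exact: measurable_normal_pdf.
move=> h; rewrite -lee_fin fineK ?N_fin//; exact: measurable_itv.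
Qed.

Lemma D_ge0 a : 0 <= a -> 0 <= Phi a - Phi (- a).
Proof.
move=> a0; rewrite Phi_diff; first exact: fine_ge0 (measure_ge0 _ _).
by rewrite lerNl; lra.
Qed.

Lemma D_ub a : 0 <= a -> Phi a - Phi (- a) <= 2 * a * peak.
Proof.
move=> a0; rewrite Phi_diff; last by lra.
have h := @N_ub (- a) a; apply: (le_trans (h _)); first lra.
by rewrite opprK le_eqVlt; apply/orP; left; apply/eqP; ring.
Qed.

Lemma D_lb a : 0 <= a -> peak * (2 * a - 5 / 8 * a ^+ 3) <= Phi a - Phi (- a).
Proof.
move=> a0.
have -> : Phi a - Phi (- a) =
   (Phi a - Phi (a / 2)) + (Phi (a / 2) - Phi (- (a / 2))) + (Phi (- (a / 2)) - Phi (- a)).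
  by ring.
have p0 : 0 < peak by rewrite normal_peak_gt0 ?oner_neq0.
have h1 : peak * (1 - a ^+ 2 / 2) * (a - a / 2) <= Phi a - Phi (a / 2).
  rewrite Phi_diff; last by lra.
  apply: N_lb; first by lra.
  move=> x /andP[x1 x2]; apply: le_trans (pdf_lb x).
  rewrite ler_pM2l //; nra.
have h2 : peak * (1 - a ^+ 2 / 8) * (a / 2 - - (a / 2)) <= Phi (a / 2) - Phi (- (a / 2)).
  rewrite Phi_diff; last by lra.
  apply: N_lb; first by lra.
  move=> x /andP[x1 x2]; apply: le_trans (pdf_lb x).
  rewrite ler_pM2l //; nra.
have h3 : peak * (1 - a ^+ 2 / 2) * (- (a / 2) - - a) <= Phi (- (a / 2)) - Phi (- a).
  rewrite Phi_diff; last by lra.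
  apply: N_lb; first by lra.
  move=> x /andP[x1 x2]; apply: le_trans (pdf_lb x).
  rewrite ler_pM2l //; nra.
have -> : peak * (2 * a - 5 / 8 * a ^+ 3) =
   peak * (1 - a ^+ 2 / 2) * (a - a / 2) + peak * (1 - a ^+ 2 / 8) * (a / 2 - - (a / 2))
   + peak * (1 - a ^+ 2 / 2) * (- (a / 2) - - a) by field.
by rewrite lerD // lerD.
Qed.

Lemma bach_callE (Z0 sig tau : R) :
  bachelier_call Z0 Z0 sig tau = sig * Num.sqrt tau * peak.
Proof.
rewrite /bachelier_call subrr mul0r add0r; case: ifPn => [t0|].
  by rewrite ler0_sqrtr // mulr0 mul0r maxxx.
by rewrite mul0r pdf0.
Qed.

Lemma bach_putE (Z0 sig tau : R) :
  bachelier_put Z0 Z0 sig tau = sig * Num.sqrt tau * peak.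
Proof.
rewrite /bachelier_put subrr mul0r add0r; case: ifPn => [t0|].
  by rewrite ler0_sqrtr // mulr0 mul0r maxxx.
by rewrite mul0r pdf0.
Qed.

Lemma d1E (Z0 sig tau : R) : 0 < Z0 -> 0 < sig -> 0 < tau ->
  (ln (Z0 / Z0) + sig ^+ 2 * tau / 2) / (sig * Num.sqrt tau) = sig * Num.sqrt tau / 2.
Proof.
move=> z0 s0 t0.
rewrite divff ?gt_eqF // ln1 add0r.
have st : 0 < Num.sqrt tau by rewrite sqrtr_gt0.
rewrite -{1}(sqr_sqrtr (ltW t0)); field.
by rewrite !gt_eqF.
Qed.

Lemma bs_callE (Z0 sig tau : R) : 0 < Z0 -> 0 < sig ->
  bs_call Z0 Z0 sig tau =
  Z0 * (Phi (sig * Num.sqrt tau / 2) - Phi (- (sig * Num.sqrt tau / 2))).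
Proof.
move=> z0 s0; rewrite /bs_call; case: ifPn => [t0|].
  by rewrite ler0_sqrtr // subrr maxxx (mulr0 sig) mul0r oppr0 subrr mulr0.
rewrite -ltNge => t0; rewrite d1E //.
have -> : sig * Num.sqrt tau / 2 - sig * Num.sqrt tau = - (sig * Num.sqrt tau / 2) by field.
by rewrite mulrBr.
Qed.

Lemma bs_putE (Z0 sig tau : R) : 0 < Z0 -> 0 < sig ->
  bs_put Z0 Z0 sig tau =
  Z0 * (Phi (sig * Num.sqrt tau / 2) - Phi (- (sig * Num.sqrt tau / 2))).
Proof.
move=> z0 s0; rewrite /bs_put; case: ifPn => [t0|].
  by rewrite ler0_sqrtr // subrr maxxx (mulr0 sig) mul0r oppr0 subrr mulr0.
rewrite -ltNge => t0; rewrite d1E //.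
have -> : sig * Num.sqrt tau / 2 - sig * Num.sqrt tau = - (sig * Num.sqrt tau / 2) by field.
by rewrite opprK mulrBr.
Qed.

Lemma Phi_nd : nondecreasing_fun Phi.
Proof.
move=> x y xy; rewrite -subr_ge0 Phi_diff //; exact: fine_ge0 (measure_ge0 _ _).
Qed.

Lemma meas_Phi : measurable_fun setT Phi.
Proof. exact: nondecreasing_measurable Phi_nd. Qed.

Lemma meas_sqrt : measurable_fun setT (@Num.sqrt R).
Proof. by apply: nondecreasing_measurable => // x y; exact: ler_wsqrtr. Qed.

Lemma peakE : peak = (Num.sqrt (2 * pi))^-1.
Proof. by rewrite /normal_peak expr1n mul1r -GRing.mulr_natl. Qed.

Definition G1 (Z0 sig tau : R) := sig * Z0 * Num.sqrt tau * peak.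
Definition G2 (Z0 sig tau : R) :=
  Z0 * (Phi (sig * Num.sqrt tau / 2) - Phi (- (sig * Num.sqrt tau / 2))).
Definition H (Z0 sig tau : R) := tau `^ (3 / 2) * (Z0 / (12 * Num.sqrt (2 * pi)) * sig ^+ 3).

Lemma meas_G1 Z0 sig : measurable_fun setT (G1 Z0 sig).
Proof.
apply: measurable_funM => //; apply: measurable_funM => //; exact: meas_sqrt.
Qed.

Lemma meas_G2 Z0 sig : measurable_fun setT (G2 Z0 sig).
Proof.
have m1 : measurable_fun setT (fun tau : R => sig * Num.sqrt tau / 2).
  apply: measurable_funM => //; apply: measurable_funM => //; exact: meas_sqrt.
apply: measurable_funM => //; apply: measurable_funB.
  exact: measurableT_comp meas_Phi m1.
apply: measurableT_comp meas_Phi _; exact: measurable_funN m1.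
Qed.

Lemma meas_H Z0 sig : measurable_fun setT (H Z0 sig).
Proof. apply: measurable_funM => //; exact: measurable_powR. Qed.

Lemma G2_ge0 Z0 sig tau : 0 < Z0 -> 0 < sig -> 0 <= G2 Z0 sig tau.
Proof.
move=> z0 s0; rewrite /G2; apply: mulr_ge0; first exact: ltW; apply: D_ge0.
by apply: divr_ge0 => //; apply: mulr_ge0; [exact: ltW | exact: sqrtr_ge0].
Qed.

Lemma G1_ge0 Z0 sig tau : 0 < Z0 -> 0 < sig -> 0 <= G1 Z0 sig tau.
Proof.
move=> z0 s0; rewrite /G1; apply: mulr_ge0; last exact: normal_peak_ge0.
by apply: mulr_ge0; [apply: mulr_ge0; exact: ltW | exact: sqrtr_ge0].
Qed.

Lemma a_ge0 (sig x : R) : 0 < sig -> 0 <= x -> 0 <= sig * x / 2.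
Proof. by move=> s0 x0; apply: divr_ge0 => //; apply: mulr_ge0 => //; exact: ltW. Qed.

Lemma G2_le_G1 Z0 sig tau : 0 < Z0 -> 0 < sig -> G2 Z0 sig tau <= G1 Z0 sig tau.
Proof.
move=> z0 s0; rewrite /G1 /G2.
have a0 := @a_ge0 _ _ s0 (sqrtr_ge0 tau).
apply: (le_trans (ler_wpM2l (ltW z0) (D_ub _ a0))).
by rewrite le_eqVlt; apply/orP; left; apply/eqP; field.
Qed.

Lemma G1_le Z0 sig tau : 0 < Z0 -> 0 < sig ->
  G1 Z0 sig tau <= G2 Z0 sig tau + H Z0 sig tau.
Proof.
move=> z0 s0; rewrite /G1 /G2 /H.
have p0 : 0 < peak by rewrite normal_peak_gt0 ?oner_neq0.
have [t0|t0] := leP tau 0.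
  rewrite ler0_sqrtr // !(mulr0 sig, mulr0, mul0r) oppr0 subrr mulr0 add0r.
  apply: mulr_ge0; first exact: powR_ge0.
  apply: mulr_ge0; last by apply: exprn_ge0; exact: ltW.
  apply: divr_ge0; first exact: ltW.
  by apply: mulr_ge0 => //; exact: sqrtr_ge0.
set x := Num.sqrt tau.
have x0 : 0 <= x by rewrite sqrtr_ge0.
have -> : tau `^ (3 / 2) = x ^+ 3.
  rewrite (_ : 3 / 2 = 2^-1 * 3%:R); last by rewrite mulrC.
  by rewrite powRrM powR12_sqrt ?ltW // powR_mulrn.
rewrite (_ : Z0 / (12 * Num.sqrt (2 * pi)) = Z0 / 12 * peak); last by rewrite peakE invfM mulrA.
have a0 := @a_ge0 _ _ s0 x0.
have hl := ler_wpM2l (ltW z0) (D_lb _ a0).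
have k : 0 <= Z0 * peak * sig ^+ 3 * x ^+ 3.
  apply: mulr_ge0; last exact: exprn_ge0.
  apply: mulr_ge0; last exact: exprn_ge0 (ltW s0).
  by apply: mulr_ge0; exact: ltW.
nra.
Qed.
End Ana.
Arguments G1 {R}.
Arguments G2 {R}.
Arguments H {R}.

Theorem theorem1 (R : realType) (d : measure_display) (Omega : measurableType d)
  (P : probability Omega R) (nu : {measure set R -> \bar R}) (U : R -> Omega -> R)
  (T Z0 sigma : R) :
  levy_measure nu -> subordinator P nu U ->
  0 < T -> 0 < Z0 -> 0 < sigma ->
  let S := inverse_subordinator U in
  let K := Z0 in
  let sigBa := sigma * Z0 in
  let bound := (\int[P]_w ((S T w) `^ (3 / 2))%:E
                * (Z0 / (12 * Num.sqrt (2 * pi)) * sigma ^+ 3)%:E)%E in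
  let CBa := subordinated_price P (S T) (bachelier_call Z0 K sigBa) in
  let C := subordinated_price P (S T) (bs_call Z0 K sigma) in
  let PBa := subordinated_price P (S T) (bachelier_put Z0 K sigBa) in
  let Pt := subordinated_price P (S T) (bs_put Z0 K sigma) in
  ((C <= CBa)%E /\ (CBa <= C + bound)%E) /\
  ((Pt <= PBa)%E /\ (PBa <= Pt + bound)%E).
Proof.
move=> _ [mU [_ monU _ _ _]] T0 z0 s0 S K sigBa bound CBa C PBa Pt.
have ms : measurable_fun setT (S T) by exact: S_meas.
have eCBa : CBa = (\int[P]_w (G1 Z0 sigma (S T w))%:E)%E.
  by apply: eq_integral => w _; rewrite bach_callE /G1.
have eC : C = (\int[P]_w (G2 Z0 sigma (S T w))%:E)%E.
  by apply: eq_integral => w _; rewrite bs_callE.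
have ePBa : PBa = CBa.
  by apply: eq_integral => w _; rewrite bach_callE bach_putE.
have ePt : Pt = C.
  by apply: eq_integral => w _; rewrite bs_callE // bs_putE.
have eb : bound = (\int[P]_w (H Z0 sigma (S T w))%:E)%E.
  rewrite /bound -ge0_integralZr //.
  all: try (by apply/measurable_EFinP; exact: (measurableT_comp (measurable_powR (3/2)) ms)).
  all: try (by move=> w _; rewrite lee_fin powR_ge0).
  rewrite lee_fin; apply: mulr_ge0; last by apply: exprn_ge0; exact: ltW.
  apply: divr_ge0; first exact: ltW.
  by apply: mulr_ge0 => //; exact: sqrtr_ge0.
have mG1 : measurable_fun setT (fun w => (G1 Z0 sigma (S T w))%:E).
  by apply/measurable_EFinP; exact: (measurableT_comp (@meas_G1 R Z0 sigma) ms).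
have mG2 : measurable_fun setT (fun w => (G2 Z0 sigma (S T w))%:E).
  by apply/measurable_EFinP; exact: (measurableT_comp (@meas_G2 R Z0 sigma) ms).
have mH : measurable_fun setT (fun w => (H Z0 sigma (S T w))%:E).
  by apply/measurable_EFinP; exact: (measurableT_comp (@meas_H R Z0 sigma) ms).
suff [h1 h2] : (C <= CBa)%E /\ (CBa <= C + bound)%E by rewrite ePBa ePt.
rewrite eCBa eC eb; split.
  apply: ge0_le_integral; [exact: measurableT | | exact: mG2 | exact: mG1 | ].
  - by move=> w _; rewrite lee_fin G2_ge0.
  - by move=> w _; rewrite lee_fin G2_le_G1.
have Hge0 : forall w, (0 <= (H Z0 sigma (S T w))%:E)%E.
  move=> w; rewrite lee_fin /H; apply: mulr_ge0; [exact: powR_ge0|].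
  apply: mulr_ge0; last by apply: exprn_ge0; exact: ltW.
  apply: divr_ge0; first exact: ltW.
  by apply: mulr_ge0 => //; exact: sqrtr_ge0.
rewrite -ge0_integralD; [| exact: measurableT | by move=> w _; rewrite lee_fin G2_ge0
  | exact: mG2 | by move=> w _; exact: Hge0 | exact: mH].
apply: ge0_le_integral; [exact: measurableT | | exact: mG1 | | ].
- by move=> w _; rewrite lee_fin G1_ge0.
- exact: emeasurable_funD.
- by move=> w _; rewrite -EFinD lee_fin G1_le.
Qed.
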